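(* Let $\alpha,\rho>0$ and let $b_f:\mathbb R_+\to(0,\infty)$ be a bounded function decreasing to $0$ on $\mathbb R_+=[0,\infty)$ with $\int_0^\infty b_f(s)s^{d-1}\,ds<\infty$. Let $f,g:\mathbb R^d\to\mathbb R_+$ be measurable, $f$ bounded, such that $f(x)\le b_f(|x|)$ for all $x\in\mathbb R^d$ and $g(x)\ge\alpha$ for all $|x|\le\rho$. Then $$\sup_{x\in\mathbb R^d,\ \eta\in\Gamma}\ \sum_{y\in\eta} f(x-y)\exp\Bigl\{-\sum_{z\in\eta\setminus\{y\}} g(z-y)\Bigr\}<\infty.$$
   Context: $\Gamma$ denotes the set of locally finite subsets $\gamma\subset\mathbb R^d$, i.e. $|\gamma\cap B|<\infty$ for every bounded Borel set $B\subset\mathbb R^d$, where $|\cdot|$ of a finite set is its cardinality; $|x|$ is the Euclidean norm. *)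

(* Defs.v *)
From Stdlib Require Import Reals Lra List.
From Stdlib Require Fin.
Open Scope R_scope.

Definition point (d : nat) := Fin.t d -> R.

Definition vsub {d} (x y : point d) : point d := fun i => x i - y i.

Fixpoint sqsum (d : nat) : (Fin.t d -> R) -> R :=
  match d return (Fin.t d -> R) -> R with
  | O => fun _ => 0
  | S n => fun v => (v Fin.F1)^2 + sqsum n (fun i => v (Fin.FS i))
  end.

Definition enorm {d} (x : point d) : R := sqrt (sqsum d x).

Definition config (d : nat) := point d -> Prop.

(* locally finite: every bounded set (equivalently every closed ball
   centred at 0) contains only finitely many points of eta *)
Definition locally_finite {d} (eta : config d) : Prop :=
  forall r : R, exists l : list (point d),
    forall y, eta y -> enorm y <= r -> In y l.

Definition sumlist {A} (h : A -> R) (l : list A) : R :=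
  fold_right (fun a acc => h a + acc) 0 l.

Definition is_glb (E : R -> Prop) (v : R) : Prop :=
  (forall w, E w -> v <= w) /\ (forall u, (forall w, E w -> u <= w) -> u <= v).

(* v = exp{ - sum_{z in eta \ {y}} g(z-y) } for g >= 0, the (possibly
   infinite) series being the sup of its finite partial sums, with
   exp(-infinity) = 0; i.e. v is the infimum over finite subsets F of
   eta \ {y} of exp{- sum_{z in F} g(z-y)}. *)
Definition expneg_sum {d} (eta : config d) (g : point d -> R) (y : point d)
  (v : R) : Prop :=
  is_glb (fun w => exists F : list (point d),
            NoDup F /\ (forall z, In z F -> eta z /\ z <> y) /\
            w = exp (- sumlist (fun z => g (vsub z y)) F)) v.

(* Main.v *)
Require Import Defs.
From Stdlib Require Import Reals List Lia Lra ZArith Classical ClassicalEpsilon.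
From Coquelicot Require Import Coquelicot.
Open Scope R_scope.

Fixpoint key (h : R) (d : nat) : (Fin.t d -> R) -> list Z :=
  match d return (Fin.t d -> R) -> list Z with
  | O => fun _ => nil
  | S n => fun v => up (v Fin.F1 / h) :: key h n (fun i => v (Fin.FS i))
  end.

Fixpoint levk (k c : list Z) : nat :=
  match k, c with
  | a :: k', b :: c' => Nat.max (Z.abs_nat (a - b)) (levk k' c')
  | _, _ => O
  end.

Lemma key_len h d : forall v, length (key h d v) = d.
Proof. induction d; intros v; simpl; auto. Qed.

Lemma sqsum_nonneg d : forall v, 0 <= sqsum d v.
Proof. induction d; intros v; simpl. lra. specialize (IHd (fun i => v (Fin.FS i))). nra. Qed.

Lemma up_close a b : up a = up b -> -1 < a - b < 1.
Proof. intros E. destruct (archimed a) as [A1 A2]. destruct (archimed b) as [B1 B2].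
  rewrite E in A1, A2. lra. Qed.

Lemma key_close h (hp : 0 < h) d : forall x y, key h d x = key h d y ->
  sqsum d (vsub x y) <= INR d * h^2.
Proof.
  induction d; intros x y E; simpl in *. lra.
  injection E as E1 E2. apply up_close in E1.
  specialize (IHd _ _ E2). unfold vsub in *.
  assert ((x Fin.F1 - y Fin.F1)^2 <= h^2).
  { replace (x Fin.F1 - y Fin.F1) with (h * (x Fin.F1 / h - y Fin.F1 / h)) by (field; lra).
    set (t := x Fin.F1 / h - y Fin.F1 / h) in *.
    assert (t^2 <= 1) by nra. nra. }
  destruct d; simpl in *; lra.
Qed.

Lemma le_sqrt_of_sq t S : 0 <= S -> t^2 <= S -> t <= sqrt S.
Proof. intros HS Ht. destruct (Rle_dec t 0). pose proof (sqrt_pos S); lra.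
  rewrite <- (sqrt_pow2 t) by lra. apply sqrt_le_1_alt. exact Ht. Qed.

Lemma lev_far h (hp : 0 < h) d : forall x y,
  (INR (levk (key h d y) (key h d x)) - 1) * h <= sqrt (sqsum d (vsub x y)).
Proof.
  induction d; intros x y; cbn [key levk sqsum].
  - rewrite sqrt_0. simpl. lra.
  - specialize (IHd (fun i => x (Fin.FS i)) (fun i => y (Fin.FS i))).
    pose proof (sqsum_nonneg d (fun i => vsub x y (Fin.FS i))) as Hn.
    change (sqsum d (fun i => vsub x y (Fin.FS i))) with
      (sqsum d (vsub (fun i => x (Fin.FS i)) (fun i => y (Fin.FS i)))) in Hn.
        set (R0 := sqsum d (vsub (fun i => x (Fin.FS i)) (fun i => y (Fin.FS i)))) in *.
    change (vsub x y Fin.F1) with (x Fin.F1 - y Fin.F1).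
    change (sqsum d (fun i => vsub x y (Fin.FS i))) with R0.
    set (t := x Fin.F1 - y Fin.F1).
    assert (sqrt R0 <= sqrt (t^2 + R0)).
    { apply sqrt_le_1_alt. pose proof (pow2_ge_0 t). lra. }
    destruct (Nat.max_spec (Z.abs_nat (up (y Fin.F1 / h) - up (x Fin.F1 / h)))
                (levk (key h d (fun i => y (Fin.FS i))) (key h d (fun i => x (Fin.FS i)))))
      as [[_ E]|[_ E]]; rewrite E; [lra|].
    rewrite INR_IZR_INZ, Nat2Z.inj_abs_nat, abs_IZR, minus_IZR.
    destruct (archimed (y Fin.F1 / h)) as [A1 A2]. destruct (archimed (x Fin.F1 / h)) as [B1 B2].
    assert (Rabs (IZR (up (y Fin.F1 / h)) - IZR (up (x Fin.F1 / h))) - 1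
            < Rabs (x Fin.F1 / h - y Fin.F1 / h)).
    { unfold Rabs; repeat destruct Rcase_abs; lra. }
    assert (Rabs (x Fin.F1 / h - y Fin.F1 / h) * h = Rabs t).
    { unfold t. replace (x Fin.F1 - y Fin.F1) with ((x Fin.F1 / h - y Fin.F1 / h) * h) by (field; lra).
      rewrite Rabs_mult, (Rabs_right h) by lra. reflexivity. }
    assert (Rabs t <= sqrt (t^2 + R0)).
    { rewrite <- sqrt_Rsqr_abs. apply sqrt_le_1_alt. unfold Rsqr. nra. }
    nra.
Qed.

Lemma sumlist_split {A} (h : A -> R) (p : A -> bool) l :
  sumlist h l = sumlist h (filter p l) + sumlist h (filter (fun a => negb (p a)) l).
Proof. induction l; simpl. lra. destruct (p a); simpl; lra. Qed.

Lemma sumlist_ext_in {A} (h1 h2 : A -> R) l :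
  (forall a, In a l -> h1 a = h2 a) -> sumlist h1 l = sumlist h2 l.
Proof. induction l; simpl; intros H. reflexivity. rewrite H, IHl; auto. Qed.

Lemma sumlist_le {A} (h1 h2 : A -> R) l :
  (forall a, In a l -> h1 a <= h2 a) -> sumlist h1 l <= sumlist h2 l.
Proof. induction l; simpl; intros H. lra. pose proof (H a (or_introl eq_refl)).
  pose proof (IHl (fun b Hb => H b (or_intror Hb))). lra. Qed.

Lemma sumlist_const {A} (h : A -> R) c l :
  (forall a, In a l -> h a = c) -> sumlist h l = INR (length l) * c.
Proof. induction l; intros H. simpl. lra.
  change (sumlist h (a::l)) with (h a + sumlist h l).
  rewrite H by (left; auto). rewrite IHl by (intros; apply H; right; auto).
  change (length (a::l)) with (S (length l)). rewrite S_INR. lra. Qed.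

Lemma sumlist_map {A B} (h : B -> R) (m : A -> B) l :
  sumlist h (map m l) = sumlist (fun a => h (m a)) l.
Proof. induction l; simpl; congruence. Qed.

Lemma sumlist_scal {A} (h : A -> R) c l :
  sumlist (fun a => c * h a) l = c * sumlist h l.
Proof. induction l; simpl. lra. rewrite IHl; lra. Qed.

Lemma sumlist_nonneg {A} (h : A -> R) l :
  (forall a, In a l -> 0 <= h a) -> 0 <= sumlist h l.
Proof. induction l; simpl; intros H. lra. pose proof (H a (or_introl eq_refl)).
  pose proof (IHl (fun b Hb => H b (or_intror Hb))). lra. Qed.

Section G.
Context {A : Type} (dec : forall x y : A, {x = y} + {x <> y}).
Definition eqb (a b : A) : bool := if dec a b then true else false.

Lemma count_filter_eq l a :
  length (filter (fun b => eqb b a) l) = count_occ dec l a.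
Proof. induction l; simpl; auto. unfold eqb. destruct (dec a0 a); simpl; auto. Qed.

Lemma count_filter_neq l a b : b <> a ->
  count_occ dec (filter (fun c => negb (eqb c a)) l) b = count_occ dec l b.
Proof. intros Hba. induction l; simpl; auto. unfold eqb at 1.
  destruct (dec a0 a); simpl.
  - subst. destruct (dec a b); [congruence|auto].
  - destruct (dec a0 b); simpl; rewrite IHl; reflexivity. Qed.

Lemma filter_length_le (p : A -> bool) l : (length (filter p l) <= length l)%nat.
Proof. induction l; simpl; auto. destruct (p a); simpl; lia. Qed.

Lemma group_sum (w : A -> R) : forall n l, (length l <= n)%nat ->
  exists U, NoDup U /\ (forall a, In a U -> In a l) /\
    sumlist (fun a => w a / INR (count_occ dec l a)) l = sumlist w U.
Proof.
  induction n; intros l Hl.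
  - destruct l; simpl in Hl; [|lia]. exists nil. repeat split; auto. constructor.
  - destruct l as [|a l'].
    + exists nil. repeat split; auto. constructor.
    + set (L := a :: l'). set (R := filter (fun c => negb (eqb c a)) L).
      assert (HR : (length R <= n)%nat).
      { unfold R, L. simpl. unfold eqb at 1. destruct (dec a a); [|congruence]. simpl.
        pose proof (filter_length_le (fun c => negb (eqb c a)) l'). simpl in Hl. lia. }
      destruct (IHn R HR) as [U [HU1 [HU2 HU3]]].
      exists (a :: U). split; [|split].
      * constructor; auto. intros Ha. apply HU2 in Ha. unfold R in Ha.
        apply filter_In in Ha. destruct Ha as [_ Ha]. unfold eqb in Ha.
        destruct (dec a a); simpl in Ha; congruence.
      * intros b [<-|Hb]. left; reflexivity. apply HU2 in Hb. unfold R in Hb.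
        apply filter_In in Hb. tauto.
      * rewrite (sumlist_split _ (fun c => eqb c a)). fold L. fold R.
        simpl sumlist at 3. rewrite <- HU3.
        rewrite (sumlist_const _ (w a / INR (count_occ dec L a))).
        2:{ intros b Hb. apply filter_In in Hb. destruct Hb as [_ Hb]. unfold eqb in Hb.
            destruct (dec b a); congruence. }
        rewrite count_filter_eq.
        assert (0 < INR (count_occ dec L a)).
        { apply lt_0_INR. unfold L. simpl. destruct (dec a a); [lia|congruence]. }
        f_equal. field. lra.
        apply sumlist_ext_in. intros b Hb. unfold R in *. apply filter_In in Hb.
        destruct Hb as [_ Hb]. unfold eqb in Hb. destruct (dec b a); simpl in Hb; [congruence|].
        rewrite count_filter_neq; auto.
Qed.
End G.

Definition zrange (a : Z) (N : nat) : list Z :=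
  map (fun i => (a - Z.of_nat N + Z.of_nat i)%Z) (seq 0 (2 * N + 1)).

Fixpoint box (c : list Z) (N : nat) : list (list Z) :=
  match c with
  | nil => nil :: nil
  | a :: c' => flat_map (fun z => map (cons z) (box c' N)) (zrange a N)
  end.



Lemma flat_map_len {A B} (f : A -> list B) k l :
  (forall a, In a l -> length (f a) = k) -> length (flat_map f l) = (length l * k)%nat.
Proof. induction l; simpl; intros H; auto. rewrite length_app, H, IHl; auto. Qed.

Lemma box_len c N : length (box c N) = ((2 * N + 1) ^ length c)%nat.
Proof.
  induction c; simpl; auto.
  rewrite (flat_map_len _ ((2 * N + 1) ^ length c)%nat).
  - unfold zrange. rewrite length_map, length_seq. replace (N + (N + 0) + 1)%nat with (2 * N + 1)%nat by lia. reflexivity.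
  - intros z _. rewrite length_map. auto.
Qed.

Lemma box_in c N : forall k, length k = length c -> (levk k c <= N)%nat -> In k (box c N).
Proof.
  induction c; intros k Hl Hlev; destruct k as [|b k]; simpl in *; try discriminate; auto.
  apply in_flat_map. exists b. split.
  - unfold zrange. apply in_map_iff. exists (Z.to_nat (b - a + Z.of_nat N)).
    assert (Z.abs_nat (b - a) <= N)%nat by lia.
    split. lia. apply in_seq. lia.
  - apply in_map. apply IHc; lia.
Qed.

Lemma box_count c N K : NoDup K -> (forall k, In k K -> length k = length c /\ (levk k c <= N)%nat) ->
  (length K <= (2 * N + 1) ^ length c)%nat.
Proof.
  intros HK H. rewrite <- box_len. apply NoDup_incl_length; auto.
  intros k Hk. destruct (H k Hk). apply box_in; auto.
Qed.

Definition W (d n : nat) : R := (2 * INR n + 1) ^ d.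
Definition D (d n : nat) : R := match n with O => W d O | S m => W d (S m) - W d m end.

Lemma W_INR d n : INR ((2 * n + 1) ^ d) = W d n.
Proof. unfold W. rewrite pow_INR, plus_INR, mult_INR. simpl. reflexivity. Qed.

Lemma sumD d N : sum_f_R0 (D d) N = W d N.
Proof. induction N; simpl. reflexivity. rewrite IHN. lra. Qed.

Lemma sum_shift d c (a b : nat -> R) N : (forall n, (n <= N)%nat -> a n = b n - c * D d n) ->
  sum_f_R0 a N = sum_f_R0 b N - c * W d N.
Proof. intros H. induction N; simpl.
  - rewrite H by lia. reflexivity.
  - rewrite IHN by (intros; apply H; lia). rewrite H by lia. simpl. lra. Qed.

Lemma sumlist_plus {A} (h1 h2 : A -> R) l : sumlist (fun a => h1 a + h2 a) l = sumlist h1 l + sumlist h2 l.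
Proof. induction l; simpl. lra. rewrite IHl. lra. Qed.

Lemma abel (c : list Z) : forall N (G : nat -> R), (forall n, 0 <= G n) ->
  (forall n m, (n <= m)%nat -> G m <= G n) ->
  forall U, NoDup U -> (forall k, In k U -> length k = length c /\ (levk k c <= N)%nat) ->
  sumlist (fun k => G (levk k c)) U <= sum_f_R0 (fun n => G n * D (length c) n) N.
Proof.
  induction N; intros G G0 Gm U HU HUc.
  - simpl. rewrite (sumlist_const _ (G O)).
    2:{ intros k Hk. destruct (HUc k Hk) as [_ Hl]. replace (levk k c) with O by lia. reflexivity. }
    pose proof (box_count c 0 U HU HUc) as Hc. apply le_INR in Hc. rewrite W_INR in Hc.
    unfold W in *. simpl in Hc |- *. rewrite Rmult_0_r, Rplus_0_l, pow1 in *.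
    pose proof (G0 O). nra.
  - set (G' := fun n => Rmax 0 (G n - G (S N))).
    assert (HG' : forall n, (n <= S N)%nat -> G' n = G n - G (S N)).
    { intros n Hn. unfold G'. apply Rmax_right. pose proof (Gm n (S N) Hn). lra. }
    rewrite (sumlist_ext_in _ (fun k => G' (levk k c) + G (S N))).
    2:{ intros k Hk. destruct (HUc k Hk) as [_ Hl]. rewrite HG' by lia. ring. }
    rewrite sumlist_plus, (sumlist_const (fun _ => G (S N)) (G (S N))) by auto.
    rewrite (sumlist_split _ (fun k => Nat.leb (levk k c) N)).
    rewrite (sumlist_const _ 0 (filter (fun k => negb (Nat.leb (levk k c) N)) U)).
    2:{ intros k Hk. apply filter_In in Hk. destruct Hk as [Hk Hb].
        destruct (HUc k Hk) as [_ Hl]. apply Bool.negb_true_iff, Nat.leb_gt in Hb.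
        unfold G'. replace (levk k c) with (S N) by lia. rewrite Rminus_diag.
        apply Rmax_left; lra. }
    assert (IH := IHN G').
    assert (H1 : sumlist (fun k => G' (levk k c)) (filter (fun k => Nat.leb (levk k c) N) U)
            <= sum_f_R0 (fun n => G' n * D (length c) n) N).
    { apply IH.
      - intros n. unfold G'. apply Rmax_l.
      - intros n m Hnm. unfold G'. apply Rle_max_compat_l. pose proof (Gm n m Hnm). lra.
      - apply NoDup_filter; auto.
      - intros k Hk. apply filter_In in Hk. destruct Hk as [Hk Hb].
        apply Nat.leb_le in Hb. destruct (HUc k Hk). auto. }
    rewrite (sum_shift (length c) (G (S N)) _ (fun n => G n * D (length c) n)) in H1.
    2:{ intros n Hn. rewrite HG' by lia. ring. }
    pose proof (box_count c (S N) U HU HUc) as Hc. apply le_INR in Hc. rewrite W_INR in Hc.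
    pose proof (G0 (S N)).
    change (sum_f_R0 (fun n => G n * D (length c) n) (S N)) with (sum_f_R0 (fun n => G n * D (length c) n) N + G (S N) * (W (length c) (S N) - W (length c) N)). nra.
Qed.

Lemma sum_bound (a Ik : nat -> R) (A B : R) : 0 <= A -> 0 <= B -> (forall k, 0 <= Ik k) ->
  (forall n, (n <= 2)%nat -> a n <= B) ->
  (forall n, (3 <= n)%nat -> a n <= A * (Ik (n - 1)%nat - Ik (n - 2)%nat)) ->
  forall N, sum_f_R0 a N <= 3 * B + A * Ik (pred N).
Proof.
  intros HA HB HI H1 H2.
  assert (Hs : forall N, (N <= 2)%nat -> sum_f_R0 a N <= INR (S N) * B).
  { induction N; intros HN. simpl. pose proof (H1 O ltac:(lia)). lra.
    simpl sum_f_R0. rewrite S_INR. pose proof (H1 (S N) HN). pose proof (IHN ltac:(lia)). lra. }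
  induction N.
  - pose proof (Hs O ltac:(lia)). pose proof (HI (pred O)). simpl in *. nra.
  - destruct (Nat.le_gt_cases (S N) 2).
    + pose proof (Hs (S N) H). pose proof (HI (pred (S N))).
      assert (INR (S (S N)) <= 3). { replace 3 with (INR 3) by (simpl; lra). apply le_INR. lia. }
      nra.
    + simpl sum_f_R0. pose proof (H2 (S N) ltac:(lia)).
      replace (S N - 1)%nat with N in H0 by lia. replace (S N - 2)%nat with (pred N) in H0 by lia.
      simpl pred. lra.
Qed.

Lemma powdiff k : forall a b, 0 <= b <= a -> a ^ (S k) - b ^ (S k) <= INR (S k) * a ^ k * (a - b).
Proof.
  induction k; intros a b Hab. simpl. lra.
  specialize (IHk a b Hab).
  replace (a ^ S (S k) - b ^ S (S k)) with (a * (a ^ S k - b ^ S k) + b ^ S k * (a - b)) by (simpl; ring).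
  assert (b ^ S k <= a ^ S k) by (apply pow_incr; lra).
  rewrite S_INR. replace (a ^ S k) with (a * a ^ k) by (simpl; ring).
  pose proof (pow_le b (S k) ltac:(lra)).
  assert (0 <= a - b) by lra. assert (0 <= a) by lra.
  replace (a ^ S k) with (a * a ^ k) in H by (simpl; ring).
  pose proof (Rmult_le_compat_l a _ _ H2 IHk).
  pose proof (Rmult_le_compat_r (a - b) _ _ H1 H).
  replace (a ^ S k) with (a * a ^ k) in * by (simpl; ring). nra.
Qed.

Definition keq := list_eq_dec Z.eq_dec.

Lemma exp_le' x y : x <= y -> exp x <= exp y.
Proof. intros H. destruct (Rle_lt_or_eq_dec x y H). left; apply exp_increasing; auto. right; congruence. Qed.

Lemma exp_bound alpha (Ha : 0 < alpha) m L : 1 <= m -> m - 1 <= L ->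
  exp (- (alpha * L)) <= (1 + / alpha) / m.
Proof.
  intros Hm HL.
  apply Rle_trans with (exp (- (alpha * (m - 1)))).
  { apply exp_le'. nra. }
  rewrite exp_Ropp. set (u := alpha * (m - 1)).
  pose proof (exp_ineq1_le u). assert (0 <= u) by (unfold u; nra).
  assert (0 < exp u) by apply exp_pos.
  assert (m <= (1 + / alpha) * exp u).
  { assert (alpha * / alpha = 1) by (field; lra). assert (0 < / alpha) by (apply Rinv_0_lt_compat; lra).
    apply Rle_trans with ((1 + / alpha) * (1 + u)). unfold u. nra. nra. }
  unfold Rdiv. apply Rmult_le_reg_l with (exp u * m). nra.
  replace (exp u * m * / exp u) with m by (field; lra).
  replace (exp u * m * ((1 + / alpha) * / m)) with ((1 + / alpha) * exp u) by (field; lra). lra.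
Qed.

Lemma count_map {P} (key : P -> list Z) Y k :
  length (filter (fun z => eqb keq (key z) k) Y) = count_occ keq (map key Y) k.
Proof. induction Y; simpl; auto. unfold eqb at 1. destruct (keq (key a) k); simpl; auto. Qed.

Lemma v_bound d (eta : config d) (g : point d -> R) (key : point d -> list Z) alpha (Ha : 0 < alpha)
  (Hclose : forall z y, key z = key y -> alpha <= g (vsub z y))
  (Y : list (point d)) (HY : NoDup Y) (HYe : forall y, In y Y -> eta y) y (Hy : In y Y) vy
  (Hv : expneg_sum eta g y vy) :
  vy <= (1 + / alpha) / INR (count_occ keq (map key Y) (key y)).
Proof.
  set (peqb := fun z : point d => if excluded_middle_informative (z = y) then true else false).
  set (F := filter (fun z => andb (eqb keq (key z) (key y)) (negb (peqb z))) Y).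
  destruct Hv as [Hv _].
  assert (H1 : vy <= exp (- sumlist (fun z => g (vsub z y)) F)).
  { apply Hv. exists F. split; [|split; [|reflexivity]].
    - apply NoDup_filter; auto.
    - intros z Hz. apply filter_In in Hz. split. apply HYe; tauto. destruct Hz as [_ Hz].
      apply andb_prop in Hz. destruct Hz as [_ Hz]. unfold peqb in Hz.
      destruct (excluded_middle_informative (z = y)); simpl in Hz; congruence. }
  assert (H2 : alpha * INR (length F) <= sumlist (fun z => g (vsub z y)) F).
  { rewrite Rmult_comm, <- (sumlist_const (fun _ => alpha) alpha F) by auto.
    apply sumlist_le. intros z Hz. apply filter_In in Hz. destruct Hz as [_ Hz].
    apply andb_prop in Hz. destruct Hz as [Hz _]. unfold eqb in Hz.
    destruct (keq (key z) (key y)); [|discriminate]. apply Hclose; auto. }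
  set (S := filter (fun z => eqb keq (key z) (key y)) Y).
  assert (H3 : (length S <= length (y :: F))%nat).
  { apply NoDup_incl_length. apply NoDup_filter; auto.
    intros z Hz. unfold S in Hz. apply filter_In in Hz. destruct Hz as [Hz1 Hz2].
    destruct (excluded_middle_informative (z = y)). left; auto. right.
    apply filter_In. split; auto. rewrite Hz2. unfold peqb.
    destruct (excluded_middle_informative (z = y)); [contradiction|reflexivity]. }
  assert (H4 : (1 <= length S)%nat).
  { destruct S eqn:ES; simpl; [|lia]. assert (In y S). { unfold S. apply filter_In. split; auto.
      unfold eqb. destruct keq; congruence. } rewrite ES in H. destruct H. }
  unfold S in H3, H4. rewrite count_map in H3, H4.
  simpl length in H3. apply le_INR in H3. apply le_INR in H4. rewrite S_INR in H3. simpl in H4.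
  apply Rle_trans with (exp (- sumlist (fun z => g (vsub z y)) F)); auto.
  apply Rle_trans with (exp (- (alpha * INR (length F)))).
  apply exp_le'. lra.
  apply exp_bound; auto. lra.
Qed.

Lemma max_bound (c : list Z) U : forall k, In k U ->
  (levk k c <= fold_right (fun k acc => Nat.max (levk k c) acc) O U)%nat.
Proof. induction U; simpl; intros k Hk. destruct Hk. destruct Hk as [<-|Hk]. lia.
  specialize (IHU k Hk). lia. Qed.

Lemma D_bounds d n : 0 <= D d n <= W d n.
Proof. destruct n; simpl. unfold W. split; [apply pow_le; simpl; lra|lra].
  unfold W. assert (0 <= 2 * INR n + 1) by (pose proof (pos_INR n); lra).
  assert ((2 * INR n + 1) ^ d <= (2 * INR (S n) + 1) ^ d) by (apply pow_incr; rewrite S_INR; lra).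
  pose proof (pow_le _ d H). lra. Qed.

Theorem lemma3p1 (d : nat) (Hd : (1 <= d)%nat)
  (alpha rho : R) (Halpha : 0 < alpha) (Hrho : 0 < rho)
  (bf : R -> R)
  (bf_pos : forall s, 0 <= s -> 0 < bf s)
  (bf_bdd : exists B, forall s, 0 <= s -> bf s <= B)
  (bf_decr : forall s t, 0 <= s -> s <= t -> bf t <= bf s)
  (bf_lim : forall eps, 0 < eps -> exists S, forall s, S <= s -> bf s < eps)
  (bf_int : exists C, forall T, 0 <= T ->
      exists pr : Riemann_integrable (fun s => bf s * s ^ (d - 1)) 0 T,
        RiemannInt pr <= C)
  (f g : point d -> R)
  (f_nonneg : forall x, 0 <= f x) (g_nonneg : forall x, 0 <= g x)
  (f_bdd : exists Bf, forall x, f x <= Bf)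
  (f_le : forall x, f x <= bf (enorm x))
  (g_ge : forall x, enorm x <= rho -> alpha <= g x) :
  exists M : R, forall (x : point d) (eta : config d), locally_finite eta ->
    forall (Y : list (point d)) (v : point d -> R),
      NoDup Y -> (forall y, In y Y -> eta y) ->
      (forall y, In y Y -> expneg_sum eta g y (v y)) ->
      sumlist (fun y => f (vsub x y) * v y) Y <= M.
Proof.
  destruct d as [|e]; [lia|]. clear Hd.
  destruct bf_int as [C HC].
  assert (Hn : 1 <= INR (S e)). { rewrite S_INR. pose proof (pos_INR e). lra. }
  set (h := rho / INR (S e)).
  assert (hp : 0 < h). { unfold h. apply Rdiv_lt_0_compat; lra. }
  set (F := fun s => bf s * s ^ (S e - 1)).
  assert (Fe : forall s, F s = bf s * s ^ e).
  { intros s. unfold F. simpl. rewrite Nat.sub_0_r. reflexivity. }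
  assert (HF : forall T, 0 <= T -> ex_RInt F 0 T /\ RInt F 0 T <= C).
  { intros T HT. destruct (HC T HT) as [pr Hpr]. split.
    apply ex_RInt_Reals_1; exact pr. replace (RInt F 0 T) with (RiemannInt pr); [exact Hpr|]. symmetry; apply RInt_Reals. }
  assert (Fpos : forall s, 0 <= s -> 0 <= F s).
  { intros s Hs. rewrite Fe. pose proof (bf_pos s Hs). pose proof (pow_le s e Hs). nra. }
  set (Ik := fun k : nat => RInt F 0 (INR k * h)).
  assert (HkT : forall k, 0 <= INR k * h). { intros k. pose proof (pos_INR k). nra. }
  assert (Ik0 : forall k, 0 <= Ik k).
  { intros k. unfold Ik. apply RInt_ge_0. apply HkT. apply HF, HkT.
    intros s Hs. apply Fpos. lra. }
  assert (IkC : forall k, Ik k <= C). { intros k. apply HF, HkT. }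
  set (G := fun n : nat => bf (Rmax 0 ((INR n - 1) * h))).
  assert (G0 : forall n, 0 <= G n). { intros n. unfold G. left. apply bf_pos, Rmax_l. }
  assert (Gm : forall n m, (n <= m)%nat -> G m <= G n).
  { intros n m Hnm. unfold G. apply bf_decr. apply Rmax_l. apply Rle_max_compat_l.
    apply le_INR in Hnm. nra. }
  set (B := bf 0 * 5 ^ (S e)).
  set (A := 2 * INR (S e) * 7 ^ e / h ^ (S e)).
  assert (HB0 : 0 <= B). { unfold B. pose proof (bf_pos 0 (Rle_refl 0)). pose proof (pow_le 5 (S e) ltac:(lra)). nra. }
  assert (HA0 : 0 <= A). { unfold A. pose proof (pow_lt 7 e ltac:(lra)). pose proof (pow_lt h (S e) hp).
    apply Rmult_le_pos. nra. left. apply Rinv_0_lt_compat. lra. }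
  assert (Hsmall : forall n, (n <= 2)%nat -> G n * D (S e) n <= B).
  { intros n Hn2. destruct (D_bounds (S e) n) as [D1 D2].
    assert (G n <= bf 0). { unfold G. apply bf_decr. lra. apply Rmax_l. }
    assert (W (S e) n <= 5 ^ S e). { unfold W. apply pow_incr. pose proof (pos_INR n).
      apply le_INR in Hn2. simpl in Hn2. lra. }
    unfold B. pose proof (G0 n). nra. }
  assert (Hlarge : forall n, (3 <= n)%nat -> G n * D (S e) n <= A * (Ik (n - 1)%nat - Ik (n - 2)%nat)).
  { intros n Hn3. destruct n as [|m]; [lia|].
    replace (S m - 1)%nat with m by lia.
    assert (Em : INR (S m - 2) = INR m - 1). { rewrite minus_INR by lia. rewrite S_INR. simpl. lra. }
    assert (Hm2 : 2 <= INR m). { replace 2 with (INR 2) by (simpl; lra). apply le_INR. lia. }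
    set (a0 := INR m - 1).
    assert (Hdiff : Ik m - Ik (S m - 2)%nat = RInt F (a0 * h) (INR m * h)).
    { unfold Ik. rewrite Em. fold a0.
      assert (Ha0 : 0 <= a0 * h) by (unfold a0; nra).
      assert (Hab : a0 * h <= INR m * h) by (unfold a0; nra).
      rewrite <- (RInt_Chasles F 0 (a0 * h) (INR m * h)).
      unfold plus; simpl. ring.
      apply HF; auto.
      apply ex_RInt_Chasles_2 with 0. lra. apply HF. lra. }
    rewrite Hdiff.
    set (g0 := bf (INR m * h)).
    assert (Hlow : h * (g0 * (a0 * h) ^ e) <= RInt F (a0 * h) (INR m * h)).
    { assert (Ha0 : 0 <= a0 * h) by (unfold a0; nra).
      assert (Hab : a0 * h <= INR m * h) by (unfold a0; nra).
      replace (h * (g0 * (a0 * h) ^ e)) with (RInt (fun _ => g0 * (a0 * h) ^ e) (a0 * h) (INR m * h)).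
      2:{ rewrite RInt_const. unfold scal; simpl. unfold mult; simpl. unfold a0. ring. }
      apply RInt_le. lra. apply ex_RInt_const.
      apply (@ex_RInt_Chasles_2 R_CompleteNormedModule F 0 (a0*h) (INR m * h)). lra. apply HF. lra.
      intros s Hs. rewrite Fe. unfold g0.
      assert (bf (INR m * h) <= bf s) by (apply bf_decr; lra).
      assert ((a0 * h) ^ e <= s ^ e) by (apply pow_incr; lra).
      pose proof (pow_le (a0 * h) e Ha0). pose proof (bf_pos (INR m * h) ltac:(nra)).
      apply Rmult_le_compat; lra. }
    assert (HG : G (S m) = g0).
    { unfold G, g0. rewrite S_INR. f_equal. rewrite Rmax_right. ring. nra. }
    rewrite HG.
    assert (HDb : D (S e) (S m) <= 2 * INR (S e) * (7 ^ e * a0 ^ e)).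
    { simpl D. unfold W.
      pose proof (powdiff e (2 * INR (S m) + 1) (2 * INR m + 1)).
      rewrite S_INR in *.
      assert (Hp : (2 * (INR m + 1) + 1) ^ e <= (7 * a0) ^ e).
      { apply pow_incr. unfold a0. lra. }
      rewrite Rpow_mult_distr in Hp.
      assert (0 <= INR (S e)) by (pose proof (pos_INR (S e)); lra).
      assert (Hx : (2 * (INR m + 1) + 1) ^ S e - (2 * INR m + 1) ^ S e <=
                   INR (S e) * (2 * (INR m + 1) + 1) ^ e * 2).
      { pose proof (H ltac:(lra)) as H'. replace ((2 * (INR m + 1) + 1) - (2 * INR m + 1)) with 2 in H' by ring. exact H'. }
      nra. }
    assert (Hg0 : 0 <= g0) by (unfold g0; left; apply bf_pos; nra).
    apply Rle_trans with (g0 * (2 * INR (S e) * (7 ^ e * a0 ^ e))).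
    { apply Rmult_le_compat_l; auto. }
    apply Rle_trans with (A * (h * (g0 * (a0 * h) ^ e))).
    2:{ apply Rmult_le_compat_l; auto. }
    unfold A. rewrite Rpow_mult_distr.
    pose proof (pow_lt h e hp).
    right. replace (h ^ S e) with (h * h ^ e) by (simpl; ring). field. split; lra. }
  exists ((1 + / alpha) * (3 * B + A * C)).
  intros x eta _ Y v HY HYe Hv.
  set (key0 := key h (S e)).
  assert (Hclose : forall z y, key0 z = key0 y -> alpha <= g (vsub z y)).
  { intros z y Hzy. apply g_ge. unfold enorm.
    pose proof (key_close h hp (S e) z y Hzy).
    apply Rle_trans with (sqrt (INR (S e) * h ^ 2)). apply sqrt_le_1_alt; auto.
    rewrite <- (sqrt_pow2 rho) by lra. apply sqrt_le_1_alt.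
    unfold h. replace (INR (S e) * (rho / INR (S e)) ^ 2) with (rho ^ 2 * / INR (S e)) by (field; lra).
    assert (/ INR (S e) <= 1). { rewrite <- Rinv_1. apply Rinv_le_contravar; lra. }
    pose proof (pow2_ge_0 rho). nra. }
  set (c := key0 x).
  set (cnt := fun k => INR (count_occ keq (map key0 Y) k)).
  apply Rle_trans with (sumlist (fun y => (1 + / alpha) * (G (levk (key0 y) c) / cnt (key0 y))) Y).
  { apply sumlist_le. intros y Hy.
    pose proof (v_bound (S e) eta g key0 alpha Halpha Hclose Y HY HYe y Hy (v y) (Hv y Hy)) as Hvy.
    fold (cnt (key0 y)) in Hvy.
    assert (Hcp : 0 < cnt (key0 y)).
    { unfold cnt. apply lt_0_INR. apply count_occ_In. apply in_map. auto. }
    assert (Hf : f (vsub x y) <= G (levk (key0 y) c)).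
    { eapply Rle_trans. apply f_le. unfold G. apply bf_decr. apply Rmax_l.
      apply Rmax_lub. apply sqrt_pos. apply lev_far; auto. }
    pose proof (f_nonneg (vsub x y)).
    assert (0 < / alpha) by (apply Rinv_0_lt_compat; lra).
    assert (0 <= (1 + / alpha) / cnt (key0 y)) by (apply Rdiv_le_0_compat; lra).
    apply Rle_trans with (f (vsub x y) * ((1 + / alpha) / cnt (key0 y))).
    apply Rmult_le_compat_l; auto.
    replace ((1 + / alpha) * (G (levk (key0 y) c) / cnt (key0 y)))
      with (G (levk (key0 y) c) * ((1 + / alpha) / cnt (key0 y))) by (field; lra).
    apply Rmult_le_compat_r; auto. }
  rewrite sumlist_scal.
  apply Rmult_le_compat_l. { pose proof (Rinv_0_lt_compat alpha Halpha). lra. }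
  rewrite <- (sumlist_map (fun k => G (levk k c) / cnt k) key0 Y).
  destruct (group_sum keq (fun k => G (levk k c)) (length (map key0 Y)) (map key0 Y) (le_n _))
    as [U [HU1 [HU2 HU3]]].
  unfold cnt. rewrite HU3.
  set (N := fold_right (fun k acc => Nat.max (levk k c) acc) O U).
  eapply Rle_trans.
  { assert (Hc : length c = S e) by (apply key_len).
    apply (abel c N G G0 Gm U HU1).
    intros k Hk. split. 2: apply max_bound; auto.
    apply HU2 in Hk. apply in_map_iff in Hk. destruct Hk as [y [<- _]].
    unfold c, key0. rewrite !key_len. reflexivity. }
  replace (length c) with (S e) by (symmetry; apply key_len).
  eapply Rle_trans. apply (sum_bound _ Ik A B HA0 HB0 Ik0 Hsmall Hlarge N).
  pose proof (IkC (pred N)). nra.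
Qed.
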